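(* For all subsets $X_i, X_j \subseteq A$: if it is not the case that $X_j$ regulates $X_i$, then $X_i \leadsto X_j$.
   Context: Let $A$ be a finite set of agents. For each $a \in A$ let $S_a$ be a nonempty finite set, and let $S = \prod_{a \in A} S_a$ be the set of states; for $s \in S$ and $X \subseteq A$, $s|_X$ denotes the restriction of $s$ to the components in $X$ (extended elementwise to sets of states). For each $a \in A$ let $\to_a \subseteq S \times S$ be a relation that is either empty or left-total, such that whenever $s \to_a s'$, either $s = s'$ or $s$ and $s'$ differ only in the $a$-component. For $X \subseteq A$ let $\to_X = \bigcup_{a \in X} \to_a$ and $\to_X^*$ its reflexive-transitive closure; for $T \subseteq S$, $(T \to_X) = \{ t' : \exists t \in T,\ t \to_X t'\}$. Orbit operator: $\Omega_X(S') = \{ s' : \exists s \in S',\ s \to_X^* s'\}$. Equilibria operator: $\Psi_X(S') = \{ s \in \Omega_X(S') : \forall s' \in S,\ s \to_X^* s' \implies s' \to_X^* s \}$. $M$-relation: for $X, Y \subseteq A$, $X \leadsto Y$ iff for every $S' \subseteq S$, with $T = \Psi_X(\Psi_{X \cup Y}(S'))$, one has $(T \to_Y) \subseteq T$. Regulation: for $a_k, a_\ell \in A$, $a_k$ regulates $a_\ell$ iff there exist $s, s' \in S$ with $s|_{A \setminus \{a_k\}} = s'|_{A \setminus \{a_k\}}$ and $(\{s\} \to_{a_\ell})|_{\{a_\ell\}} \neq (\{s'\} \to_{a_\ell})|_{\{a_\ell\}}$. For $X, Y \subseteq A$, $X$ regulates $Y$ iff some $a_k \in X$ regulates some $a_\ell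 \in Y$. *)

(* Defs.v *)
From mathcomp Require Import all_boot.
Set Implicit Arguments. Unset Strict Implicit. Unset Printing Implicit Defensive.

Section Defs.
Variables (A : finType) (S : A -> finType).

Definition state := {dffun forall a : A, S a}.

Variable step : A -> rel state.

Definition stepX (X : {set A}) : rel state :=
  fun s t => [exists a in X, step a s t].

Definition Omega (X : {set A}) (S' : {set state}) : {set state} :=
  [set s' | [exists s in S', connect (stepX X) s s']].

Definition Psi (X : {set A}) (S' : {set state}) : {set state} :=
  [set s in Omega X S' |
     [forall s', connect (stepX X) s s' ==> connect (stepX X) s' s]].

Definition leadsto (X Y : {set A}) : Prop :=
  forall S' : {set state},
    let T := Psi X (Psi (X :|: Y) S') in
    forall t t', t \in T -> stepX Y t t' -> t' \in T.

Definition succ_comp (a : A) (s : state) : {set S a} :=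
  [set (t : state) a | t in [set t : state | step a s t]].

Definition regulates_agent (ak al : A) : Prop :=
  exists s s' : state,
    (forall b, b != ak -> s b = s' b) /\ succ_comp al s != succ_comp al s'.

Definition regulates (X Y : {set A}) : Prop :=
  exists ak al, [/\ ak \in X, al \in Y & regulates_agent ak al].

End Defs.

(* Main.v *)
Require Import Defs.
From mathcomp Require Import all_boot.

Section Aux.
Variables (A : finType) (S : A -> finType) (step : A -> rel (state S)).
Hypothesis Hlocal : forall (a : A) (s t : state S), step a s t ->
     s = t \/ (forall b : A, b != a -> s b = t b).

Lemma step_off {a s t c} : step a s t -> c != a -> s c = t c.
Proof. by move=> /Hlocal [-> //|H] /H. Qed.

Variables (X : {set A}) (b : A).
Hypothesis bX : b \notin X.
Hypothesis Hnr : forall a, a \in X -> forall s s' : state S,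
  (forall c, c != b -> s c = s' c) -> succ_comp step a s = succ_comp step a s'.

Definition Roff (s s' : state S) := forall c, c != b -> s c = s' c.

Lemma lift1 {s s' u} : Roff s s' -> stepX step X s u ->
  exists2 u', stepX step X s' u' & Roff u u'.
Proof.
move=> R /existsP [a /andP [aX sau]].
have ab : a != b by apply: contraNneq bX => <-.
have : u a \in succ_comp step a s' by
  rewrite -(@Hnr a aX s s' R); apply/imsetP; exists u; rewrite ?inE.
case/imsetP => w; rewrite inE => s'aw ew.
exists w; first by apply/existsP; exists a; rewrite aX.
move=> c cb; case: (eqVneq c a) => [->|ca]; first by [].
by rewrite -(step_off sau ca) -(step_off s'aw ca) R.
Qed.

Lemma liftc {s s' u} : Roff s s' -> connect (stepX step X) s u ->
  exists2 u', connect (stepX step X) s' u' & Roff u u'.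
Proof.
move=> R /connectP [p]; elim: p s s' R => [|x p IH] s s' R /=.
  by move=> _ ->; exists s'.
case/andP => sx px eu.
have [x' s'x' Rx] := lift1 R sx.
have [u' c u'R] := IH _ _ Rx px eu.
by exists u' => //; apply: connect_trans c; apply: connect1.
Qed.

Lemma presb {s u} : connect (stepX step X) s u -> s b = u b.
Proof.
move=> /connectP [p]; elim: p s => [|x p IH] s /=; first by move=> _ ->.
case/andP => /existsP [a /andP [aX sax]] px eu.
rewrite (step_off sax); last by apply: contraNneq bX => ->.
exact: IH px eu.
Qed.
End Aux.
Arguments step_off {A S step} Hlocal {a s t c}.
Arguments liftc {A S step} Hlocal {X b} bX Hnr {s s' u}.
Arguments presb {A S step} Hlocal {X b} bX {s u}.

Theorem lemma1 (A : finType) (S : A -> finType)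
  (HSne : forall a : A, 0 < #|S a|)
  (step : A -> rel (state S))
  (Hempty_or_total : forall a : A,
     (forall s t, ~~ step a s t) \/ (forall s, exists t, step a s t))
  (Hlocal : forall (a : A) (s t : state S), step a s t ->
     s = t \/ (forall b : A, b != a -> s b = t b))
  (Xi Xj : {set A}) :
  ~ regulates step Xj Xi -> leadsto step Xi Xj.
Proof.
move=> Hnreg S' T t t' tT; rewrite /T {T} in tT *; case/existsP => b /andP [bY tbt'].
set P := Psi step (Xi :|: Xj) S'.
move: tT; rewrite /Psi inE => /andP [tO /forallP rt].
move: tO; rewrite inE => /existsP [p /andP [pP ppt]].
have subXY : forall (Z : {set A}) (s u : state S), Z \subset Xi :|: Xj -> connect (stepX step Z) s u ->
    connect (stepX step (Xi :|: Xj)) s u.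
  move=> Z s u sZ; apply: connect_sub => x y /existsP [a /andP [aZ xay]].
  by apply: connect1; apply/existsP; exists a; rewrite xay (subsetP sZ).
have ptXY : connect (stepX step (Xi :|: Xj)) p t'.
  apply: connect_trans (subXY _ _ _ (subsetUl _ _) ppt) _.
  apply: connect1; apply/existsP; exists b; rewrite tbt' andbT inE bY orbT //.
have t'P : t' \in P.
  move: pP; rewrite /P /Psi !inE => /andP [/existsP [s0 /andP [s0S s0p]] /forallP rp].
  apply/andP; split.
    by apply/existsP; exists s0; rewrite s0S (connect_trans s0p ptXY).
  apply/forallP => s'; apply/implyP => t's'.
  by apply: connect_trans (implyP (rp s') (connect_trans ptXY t's')) ptXY.
rewrite /Psi inE; apply/andP; split.
  by rewrite inE; apply/existsP; exists t'; rewrite t'P connect0.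
apply/forallP => s'; apply/implyP => t's'.
case: (boolP (b \in Xi)) => bX.
  have tt' : connect (stepX step Xi) t t'
    by apply: connect1; apply/existsP; exists b; rewrite bX.
  exact: connect_trans (implyP (rt s') (connect_trans tt' t's')) tt'.
have Hnr : forall a, a \in Xi -> forall s s' : state S,
    (forall c, c != b -> s c = s' c) -> succ_comp step a s = succ_comp step a s'.
  move=> a aX s s'' R; apply/eqP; apply/negPn/negP => ne.
  by apply: Hnreg; exists b, a; split => //; exists s, s''.
have Rt't : forall c, c != b -> t' c = t c.
  by move=> c cb; apply/esym; exact: (step_off Hlocal tbt' cb).
have [u tu Rs'u] := liftc Hlocal bX Hnr Rt't t's'.
have Rus' : forall c, c != b -> u c = s' c by move=> c cb; rewrite Rs'u.
have [w s'w Rtw] := liftc Hlocal bX Hnr Rus' (implyP (rt u) tu).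
suff -> : t' = w by [].
apply/ffunP => c; case: (eqVneq c b) => [->|cb].
  by rewrite (presb Hlocal bX t's') (presb Hlocal bX s'w).
by rewrite (Rt't c cb) (Rtw c cb).
Qed.
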